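(* For every integer $m \geq 1$, the clique number of the graph $\mathrm{Cay}(\sigma_m)$ is at most $\rho(2^m)$, where $\rho$ is the Hurwitz-Radon function. Moreover, $\rho(2^m) < 2^m$ for $m \geq 4$.
   Context: Identify $\mathbb{Z}_2^{2m}$ with the integers $0,\dots,4^m-1$ via binary representation, so each $i \in \mathbb{Z}_2^{2m}$ has a base-4 representation with $m$ digits (each base-4 digit being a consecutive pair of bits). Define $\sigma_m:\mathbb{Z}_2^{2m}\to\mathbb{Z}_2$ by $\sigma_m(i)=1$ if and only if the number of base-4 digits of $i$ equal to $1$ is odd. The Cayley graph $\mathrm{Cay}(\sigma_m)$ is the simple undirected graph with vertex set $\mathbb{Z}_2^{2m}$ in which distinct $i,j$ are adjacent if and only if $\sigma_m(i+j)=1$. The Hurwitz-Radon function is defined by $\rho(2^{4d+c}) = 2^c + 8d$ for integers $d \geq 0$ and $0 \leq c < 4$. *)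

(* Defs.v *)
From mathcomp Require Import all_boot.
Set Implicit Arguments. Unset Strict Implicit. Unset Printing Implicit Defensive.

(* Z_2^{2m} identified with the integers 0 .. 4^m - 1 (binary representation);
   the group addition of Z_2^{2m} is bitwise XOR on these integers. *)
Definition vtx (m : nat) := 'I_(4 ^ m).

Definition zadd (i j : nat) : nat := Nat.lxor i j.

Definition digit4 (i k : nat) : nat := (i %/ 4 ^ k) %% 4.

Definition sigma (m i : nat) : bool :=
  odd (count (fun k => digit4 i k == 1) (iota 0 m)).

Definition cay_adj (m : nat) (i j : vtx m) : bool :=
  (i != j) && sigma m (zadd i j).

Definition is_clique (m : nat) (S : {set vtx m}) : bool :=
  [forall i in S, forall j in S, (i != j) ==> cay_adj i j].

Definition clique_number (m : nat) : nat :=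
  \max_(S : {set vtx m} | is_clique S) #|S|.

(* Hurwitz-Radon function: rho(2^(4d+c)) = 2^c + 8d, 0 <= c < 4.
   Only used at powers of two; n = 2^(logn 2 n) there. *)
Definition rho (n : nat) : nat :=
  let k := logn 2 n in 2 ^ (k %% 4) + 8 * (k %/ 4).

(* Main.v *)
Require Import Defs.
From HB Require Import structures.
From Stdlib Require Import PeanoNat.
From mathcomp Require Import all_boot all_algebra all_field.
From mathcomp Require Import ring zify.
Set Implicit Arguments. Unset Strict Implicit. Unset Printing Implicit Defensive.
Import GRing.Theory Num.Theory.

Definition q (w : nat) := odd 'C(w.+1, 2).

Lemma qS w : q w.+1 = ~~ q w (+) odd w.
Proof. by rewrite /q binS bin1 oddD /=; case: odd; case: odd. Qed.

Lemma q4 w : q w.+4 = q w.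
Proof. rewrite !qS /=; by case: (q w); case: (odd w). Qed.


Section V.
Variable m : nat.
Definition V := {ffun 'I_m -> bool * bool}.
Definition vadd (f g : V) : V := [ffun k => ((f k).1 (+) (g k).1, (f k).2 (+) (g k).2)].
Definition v0 : V := [ffun => (false, false)].
Lemma vaddA : associative vadd.
Proof. by move=> f g h; apply/ffunP=> k; rewrite !ffunE /= !addbA. Qed.
Lemma vaddC : commutative vadd.
Proof. by move=> f g; apply/ffunP=> k; rewrite !ffunE /= addbC [_.2 (+) _]addbC. Qed.
Lemma vadd0 : left_id v0 vadd.
Proof. by move=> f; apply/ffunP=> k; rewrite !ffunE /=; case: (f k). Qed.
HB.instance Definition _ := Monoid.isComLaw.Build V v0 vadd vaddA vaddC vadd0.

Lemma vaddvv f : vadd f f = v0.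
Proof. by apply/ffunP=> k; rewrite !ffunE !addbb. Qed.

Definition Q (f : V) : bool := \big[addb/false]_k ((f k).1 && ~~ (f k).2).
Definition B (f g : V) : bool :=
  \big[addb/false]_k (((f k).1 && (g k).2) (+) ((f k).2 && (g k).1)).

Lemma QD f g : Q (vadd f g) = Q f (+) Q g (+) B f g.
Proof.
rewrite /Q /B -!big_split /=; apply: eq_bigr => k _; rewrite ffunE /=.
by case: (f k) (g k) => [[] []] [[] []].
Qed.

Lemma BC f g : B f g = B g f.
Proof. by apply: eq_bigr => k _; case: (f k) (g k) => [[] []] [[] []]. Qed.

Lemma BDl f g h : B (vadd f g) h = B f h (+) B g h.
Proof.
rewrite /B -big_split /=; apply: eq_bigr => k _; rewrite ffunE /=.
by case: (f k) (g k) (h k) => [[] []] [[] []] [[] []].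
Qed.

Lemma B0l h : B v0 h = false.
Proof. by rewrite /B big1 // => k _; rewrite ffunE. Qed.

Lemma B_sum (I : finType) (P : pred I) (F : I -> V) h :
  B (\big[vadd/v0]_(i | P i) F i) h = \big[addb/false]_(i | P i) B (F i) h.
Proof. by apply: (big_morph (fun x => B x h)); [move=> *; apply: BDl | apply: B0l]. Qed.

End V.
Arguments vadd {m}.
Arguments v0 {m}.

Lemma B_sumr m (I : eqType) (r : seq I) (P : pred I) (F : I -> V m) h :
  B (\big[vadd/v0]_(i <- r | P i) F i) h = \big[addb/false]_(i <- r | P i) B (F i) h.
Proof. by apply: (big_morph (fun x => B x h)); [move=> *; apply: BDl | apply: B0l]. Qed.

Lemma addb_sum (I : finType) (P : pred I) (b : I -> bool) :
  \big[addb/false]_(i | P i) b i = odd (\sum_(i | P i) b i).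
Proof. rewrite (big_morph odd oddD (erefl (odd 0))); apply: eq_bigr => i _; by case: (b i). Qed.

Lemma addb_true (I : Type) (r : seq I) : \big[addb/false]_(i <- r) true = odd (size r).
Proof. by elim: r => [|a r IH]; rewrite ?big_nil ?big_cons ?IH. Qed.


Section Fam.
Variables (m n : nat) (v : 'I_n -> V m).
Hypothesis hQ : forall i, Q (v i).
Hypothesis hB : forall i j, i != j -> B (v i) (v j).

Definition phi (x : {set 'I_n}) : V m := \big[vadd/v0]_(i in x) v i.

Lemma Bphi x j : B (phi x) (v j) = odd #|x| (+) (j \in x).
Proof.
rewrite /phi B_sumr.
rewrite (eq_bigr (fun i => i != j)); last first.
  move=> i _; case: eqP => [->|/eqP ne]; last exact: hB.
  by rewrite /B big1 // => k _; case: (v j k) => [[] []].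
rewrite addb_sum.
have <- : \sum_(i in x) (i != j) + (j \in x) = #|x|.
  rewrite -sum1_card; case: (boolP (j \in x)) => jx.
    rewrite (bigD1 j jx) [RHS](bigD1 j jx) /= eqxx add0n addn1 add1n; congr S.
    by apply: eq_bigr => i /andP[_ ->].
  rewrite addn0; apply: eq_bigr => i ix; case: eqP => // eij.
  by rewrite -eij ix in jx.
by rewrite oddD; case: (j \in x); case: odd.
Qed.

Lemma Qphi x : Q (phi x) = q #|x|.
Proof.
rewrite /phi -big_enum cardE.
have : uniq (enum x) by apply: enum_uniq.
elim: (enum x) => [|i r IH] /=.
  by rewrite big_nil /Q big1 // => k _; rewrite ffunE.
case/andP=> ir ur; rewrite big_cons QD hQ IH // qS BC B_sumr.
rewrite (eq_big_seq (fun _ => true)); last first.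
  move=> j jr; apply: hB; apply/eqP=> e; by rewrite -e jr in ir.
by rewrite addb_true; case: q; case: odd.
Qed.

Lemma phi_inj : ~~ odd n -> injective phi.
Proof.
move=> ev x y e.
have H j : odd #|x| (+) (j \in x) = odd #|y| (+) (j \in y) by rewrite -!Bphi e.
case: (boolP (odd #|x| == odd #|y|)) => [/eqP oe|ne].
  by apply/setP=> j; have := H j; rewrite oe => /addbI.
have yc : y = ~: x.
  apply/setP=> j; rewrite in_setC; have := H j.
  by move: ne; case: odd; case: odd; case: (j \in x); case: (j \in y).
exfalso; move: ne; rewrite yc.
have := cardsC x; rewrite card_ord => cx.
have : odd n = odd #|x| (+) odd #|~: x| by rewrite -oddD cx.
move: ev => /negbTE ->; by case: odd; case: odd.
Qed.
End Fam.
Section Sums.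
Local Open Scope ring_scope.

Lemma sign_q (w : nat) :
  2 * (-1) ^+ q w = (1 + 'i) * 'i ^+ w + (1 - 'i) * (- 'i) ^+ w :> algC.
Proof.
have h := @sqrCi algC.
have h4 : 'i ^+ 4 = 1 :> algC by ring: h.
have h4' : (- 'i) ^+ 4 = 1 :> algC by ring: h.
elim: w {-2}w (leqnn w) => [|n IH] w.
  rewrite leqn0 => /eqP ->; rewrite /q /=; ring.
rewrite leq_eqVlt => /orP[/eqP ->|]; last exact: IH.
case: n IH => [|[|[|n]]] IH.
- rewrite /q /=; ring: h.
- rewrite /q /=; ring: h.
- rewrite /q /=; ring: h.
rewrite q4 (IH n); last by rewrite leqW // leqW // leqW.
by rewrite -[n.+4]addn4 !exprD h4 h4' !mulr1.
Qed.

Lemma sum_set_pow (n : nat) (c : algC) :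
  \sum_(x : {set 'I_n}) c ^+ #|x| = (1 + c) ^+ n.
Proof.
have E : \prod_(i < n) (c + 1) =
    \sum_(J : {set 'I_n}) \prod_(i < n) (if i \in J then c else 1).
  by rewrite bigA_distr.
rewrite addrC; move: E; rewrite prodr_const card_ord => ->; apply: eq_bigr => x _.
by rewrite -big_mkcond /= prodr_const.
Qed.

Lemma sum_sets (m : nat) :
  \sum_(x : {set 'I_(2 * m)%N}) (-1) ^+ q #|x| = 2 ^+ m * (-1) ^+ q m :> algC.
Proof.
have h := @sqrCi algC.
apply: (@mulfI _ 2); first by rewrite pnatr_eq0.
rewrite mulr_sumr; under eq_bigr => x _ do rewrite sign_q; rewrite big_split /=.
rewrite -!mulr_sumr !sum_set_pow !exprM.
have -> : (1 + 'i) ^+ 2 = 2 * 'i :> algC by ring: h.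
have -> : (1 + - 'i) ^+ 2 = 2 * - 'i :> algC by ring: h.
rewrite mulrCA sign_q !exprMn; ring.
Qed.


Lemma sum_V m : \sum_(f : V m) (-1) ^+ Q f = 2 ^+ m :> algC.
Proof.
have E f : (-1) ^+ Q f = \prod_(k < m) (-1) ^+ ((f k).1 && ~~ (f k).2) :> algC.
  rewrite /Q; apply: (big_morph (fun b : bool => (-1) ^+ b : algC)).
    by move=> a b; rewrite signr_addb.
  by [].
under eq_bigr => f _ do rewrite E.
rewrite -(bigA_distr_bigA (fun (k : 'I_m) (p : bool * bool) => (-1) ^+ (p.1 && ~~ p.2) : algC)).
rewrite prodr_const card_ord; congr (_ ^+ _).
rewrite -(pair_bigA _ (fun a b : bool => (-1) ^+ (a && ~~ b) : algC)) /=.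
by rewrite !big_bool /=; ring.
Qed.

Lemma card_V m : #|V m| = (4 ^ m)%N.
Proof. by rewrite /V card_ffun card_prod card_bool card_ord. Qed.

Lemma card_sets n : #|{set 'I_n}| = (2 ^ n)%N.
Proof. by rewrite -cardsT -powersetT card_powerset cardsT card_ord. Qed.

End Sums.

Lemma q_double m : q (2 * m) = odd m.
Proof.
elim: m => [|m IH] //; rewrite mulnS add2n !qS /= oddM /= IH.
by case: odd.
Qed.

Section Fam2.
Variables (m n : nat) (v : 'I_n -> V m).
Hypothesis hQ : forall i, Q (v i).
Hypothesis hB : forall i j, i != j -> B (v i) (v j).

Lemma fam_even : ~~ odd n -> (2 ^ n <= 4 ^ m)%N.
Proof. move=> ev; rewrite -card_V -card_sets. exact: (leq_card (phi v) (phi_inj hB ev)). Qed.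

Lemma fam_bij : n = (2 * m)%N -> bijective (phi v).
Proof.
move=> e; apply: inj_card_bij; first by apply: phi_inj => //; rewrite e oddM.
by rewrite card_V card_sets e expnM.
Qed.

Lemma fam_arf : n = (2 * m)%N -> ~~ q m.
Proof.
Local Open Scope ring_scope.
move=> e; have bij := fam_bij e.
have := sum_V m.
rewrite (reindex (phi v) (onW_bij _ bij)) /=.
under eq_bigr => x _ do rewrite (Qphi hQ hB).
have -> : forall k, (k = 2 * m)%N -> \sum_(x : {set 'I_k}) (-1) ^+ q #|x| = 2 ^+ m * (-1) ^+ q m :> algC.
  by move=> k ->; apply: sum_sets.
case: (q m) => // /esym/eqP; rewrite expr1 mulrN1 -subr_eq0 opprK -mulr2n.
rewrite mulrn_eq0 /= expf_eq0 pnatr_eq0 andbF //.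
exact: e.
Qed.
End Fam2.

Lemma fam_odd m (v : 'I_(2 * m).+1 -> V m) :
  (forall i, Q (v i)) -> (forall i j, i != j -> B (v i) (v j)) -> odd m.
Proof.
move=> hQ hB.
pose w := fun i : 'I_(2 * m) => v (widen_ord (leqnSn _) i).
have wQ i : Q (w i) by apply: hQ.
have wB i j : i != j -> B (w i) (w j).
  move=> ne; apply: hB; apply: contra ne => /eqP e; apply/eqP/val_inj.
  by move: e => /(congr1 val).
have [g _ gK] := fam_bij wB (erefl _).
set x := g (v ord_max).
have hx : phi w x = v ord_max by rewrite /x gK.
have H j : (j \in x) = ~~ odd #|x|.
  have := Bphi wB x j; rewrite hx hB.
    by case: (j \in x); case: odd.
  apply/eqP => /(congr1 val) /= e.
  by move: (ltn_ord j); rewrite -e ltnn.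
case: (boolP (odd #|x|)) => ox.
  have x0 : x = set0 by apply/setP => j; rewrite H ox in_set0.
  by move: ox; rewrite x0 cards0.
have xT : x = setT by apply/setP => j; rewrite H ox in_setT.
have := Qphi wQ wB x; rewrite hx hQ xT cardsT card_ord q_double.
by move=> <-.
Qed.

Lemma fam_restr m n n' (v : 'I_n -> V m) (le : (n' <= n)%N) :
  (forall i, Q (v i)) -> (forall i j, i != j -> B (v i) (v j)) ->
  (forall i, Q (v (widen_ord le i))) /\
  (forall i j, i != j -> B (v (widen_ord le i)) (v (widen_ord le j))).
Proof.
move=> hQ hB; split=> // i j ne; apply: hB; apply: contra ne => /eqP e.
by apply/eqP/val_inj; move: e => /(congr1 val).
Qed.

Lemma fam_bound m n (v : 'I_n -> V m) :
  (forall i, Q (v i)) -> (forall i j, i != j -> B (v i) (v j)) ->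
  [/\ (n <= (2 * m).+1)%N, ((2 * m) <= n -> ~~ q m)%N & ((2 * m).+1 <= n -> odd m)%N].
Proof.
move=> hQ hB; split.
- rewrite leqNgt; apply/negP => lt.
  have [wQ wB] := fam_restr lt hQ hB.
  have := fam_even wB; rewrite /= oddM /= => /(_ isT).
  have -> : (4 ^ m = 2 ^ (2 * m))%N by rewrite expnM.
  by rewrite leq_exp2l // ltnNge leqW.
- move=> le; have [wQ wB] := fam_restr le hQ hB.
  exact: (fam_arf wQ wB (erefl _)).
- move=> le; have [wQ wB] := fam_restr le hQ hB.
  exact: (fam_odd wQ wB).
Qed.

Lemma vaddK m (c : V m) : involutive (vadd^~ c).
Proof. by move=> s; rewrite /= -vaddA vaddvv vaddC vadd0. Qed.

Lemma clique_V m (T : {set V m}) :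
  (forall s t, s \in T -> t \in T -> s != t -> Q (vadd s t)) ->
  [/\ (#|T| <= (2 * m).+2)%N, ((2 * m).+1 <= #|T| -> ~~ q m)%N
    & ((2 * m).+2 <= #|T| -> odd m)%N].
Proof.
move=> hT.
case: (set_0Vmem T) => [->|[c cT]]; first by rewrite cards0.
pose U := [set vadd s c | s in T :\ c].
have cU : #|U| = #|T|.-1.
  rewrite (cardsD1 c T) cT /= /U card_in_imset //.
  by move=> s t _ _ /= e; rewrite -(vaddK c s) -(vaddK c t) /= e.
pose v := fun i : 'I_#|U| => enum_val i.
have memU i : exists2 s, s \in T :\ c & v i = vadd s c.
  by rewrite /v; have /imsetP[s ? ->] := enum_valP i; exists s.
have hQ i : Q (v i).
  have [s /setD1P[sc sT] ->] := memU i; exact: hT.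
have hB i j : i != j -> B (v i) (v j).
  move=> ne; have nev : v i != v j by apply: contra ne => /eqP /enum_val_inj ->.
  have [s /setD1P[sc sT] es] := memU i; have [t /setD1P[tc tT] et] := memU j.
  have st : s != t by apply: contra nev => /eqP st; rewrite es et st.
  have := QD (v i) (v j); rewrite hQ hQ.
  have -> : vadd (v i) (v j) = vadd s t.
    rewrite es et -vaddA [vadd c _]vaddA [vadd c t]vaddC -vaddA vaddvv.
    by rewrite [vadd t v0]vaddC vadd0.
  by rewrite hT //; case: B.
have [h1 h2 h3] := fam_bound hQ hB.
have Tpos : (0 < #|T|)%N by apply/card_gt0P; exists c.
rewrite cU in h1 h2 h3.
split.
- by rewrite -(prednK Tpos) ltnS.
- by move=> le; apply: h2; rewrite -ltnS prednK.
- by move=> le; apply: h3; rewrite -ltnS prednK.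
Qed.

Lemma dig y : (y %% 4 == 1) = odd y && ~~ odd (y %/ 2).
Proof.
have h1 := modn2 y; have h2 := modn2 (y %/ 2).
case: (odd y) h1; case: (odd (y %/ 2)) h2 => /= h2 h1; lia.
Qed.

Lemma divE a b : Nat.div a b = a %/ b.
Proof.
case: b => [|b]; first by rewrite divn0; case: a.
symmetry; apply: (Nat.div_unique _ _ _ (a %% b.+1)).
  by apply/ltP; rewrite ltn_mod.
by rewrite {1}(divn_eq a b.+1) mulnC multE plusE.
Qed.

Lemma powE a b : Nat.pow a b = a ^ b.
Proof. by elim: b => [|b IH] //=; rewrite IH expnS multE. Qed.

Lemma noddE y : Nat.odd y = odd y.
Proof.
suff: Nat.odd y = odd y /\ Nat.odd y.+1 = odd y.+1 by case.
elim: y => [|y [IH0 IH1]] //; split=> //.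
by transitivity (Nat.odd y); [by [] | rewrite IH0 /= negbK].
Qed.

Lemma tb_even i k : Nat.testbit i (2 * k) = odd (i %/ 4 ^ k).
Proof.
have := Nat.div_pow2_bits i (2 * k) 0; rewrite /= => <-.
by rewrite divE powE expnM noddE.
Qed.

Lemma tb_odd i k : Nat.testbit i (2 * k).+1 = odd (i %/ 4 ^ k %/ 2).
Proof.
have := Nat.div_pow2_bits i (2 * k) 1; rewrite /= => <-.
by rewrite divE powE expnM Nat.div2_div divE noddE.
Qed.

Definition toV m (i : nat) : V m :=
  [ffun k : 'I_m => (Nat.testbit i (2 * k), Nat.testbit i (2 * k).+1)].

Lemma digit_tb i k : (digit4 i k == 1) = Nat.testbit i (2 * k) && ~~ Nat.testbit i (2 * k).+1.
Proof. by rewrite tb_even tb_odd /digit4 dig. Qed.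

Lemma odd_count (T : Type) (p : pred T) s : odd (count p s) = \big[addb/false]_(k <- s) p k.
Proof. elim: s => [|a s IH]; rewrite ?big_nil ?big_cons //= oddD IH; by case: (p a). Qed.

Lemma sigma_toV m i : sigma m i =
  \big[addb/false]_(k < m) (((toV m i) k).1 && ~~ ((toV m i) k).2).
Proof.
rewrite /sigma odd_count.
have -> : iota 0 m = index_iota 0 m by rewrite /index_iota subn0.
rewrite big_mkord; apply: eq_bigr => k _; by rewrite digit_tb ffunE.
Qed.

Lemma toV_add m i j k :
  toV m (zadd i j) k = (((toV m i) k).1 (+) ((toV m j) k).1, ((toV m i) k).2 (+) ((toV m j) k).2).
Proof.
rewrite !ffunE /zadd !Nat.lxor_spec.
by case: (Nat.testbit i (2*k)); case: (Nat.testbit j (2*k));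
   case: (Nat.testbit i (2*k).+1); case: (Nat.testbit j (2*k).+1).
Qed.

Lemma tb_high i n k : (i < 2 ^ n)%N -> (n <= k)%N -> Nat.testbit i k = false.
Proof.
move=> lt le; apply/Nat.testbit_false.
rewrite divE powE divn_small //; apply: (leq_trans lt); by rewrite leq_exp2l.
Qed.

Lemma toV_inj m (i j : 'I_(4 ^ m)) : toV m i = toV m j -> i = j.
Proof.
move=> e; apply/val_inj/Nat.bits_inj => n /=.
have hi : (i < 2 ^ (2 * m))%N by rewrite expnM.
have hj : (j < 2 ^ (2 * m))%N by rewrite expnM.
case: (leqP (2 * m) n) => le; first by rewrite (tb_high hi le) (tb_high hj le).
have en : n = (2 * (n %/ 2) + odd n)%N by rewrite -modn2; lia.
have kl : (n %/ 2 < m)%N by lia.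
have := congr1 (fun f : V m => f (Ordinal kl)) e; rewrite !ffunE /= => -[e1 e2].
rewrite en; case: (odd n) => /=; by rewrite ?addn0 ?addn1.
Qed.


Lemma sigma_Q m i : sigma m i = Q (toV m i).
Proof. by rewrite sigma_toV. Qed.

Lemma toV_vadd m i j : toV m (zadd i j) = vadd (toV m i) (toV m j).
Proof. by apply/ffunP => k; rewrite toV_add [RHS]ffunE. Qed.

Lemma q_mod4 m : q m = q (m %% 4).
Proof.
rewrite {1}(divn_eq m 4); elim: (m %/ 4) => [|d IH]; first by rewrite mul0n add0n.
by rewrite mulSn -addnA add4n q4.
Qed.

Lemma odd_mod4 m : odd m = odd (m %% 4).
Proof. by rewrite {1}(divn_eq m 4) oddD oddM /= andbF. Qed.

Lemma rhoE m : rho (2 ^ m) = (2 ^ (m %% 4) + 8 * (m %/ 4))%N.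
Proof. by rewrite /rho pfactorK. Qed.

Lemma lem16 d : (0 < d)%N -> (1 + 8 * d < 16 ^ d)%N.
Proof.
case: d => // d _; elim: d => [|d IH] //.
rewrite expnS; lia.
Qed.

Theorem lemma3 :
  (forall m : nat, 1 <= m -> clique_number m <= rho (2 ^ m)) /\
  (forall m : nat, 4 <= m -> rho (2 ^ m) < 2 ^ m).
Proof.
split.
- move=> m _; apply/bigmax_leqP => S cS.
  pose T := (fun i : 'I_(4 ^ m) => toV m i) @: S.
  have cT : #|T| = #|S|.
    by rewrite card_in_imset // => i j _ _; apply: toV_inj.
  have hT : forall s t, s \in T -> t \in T -> s != t -> Q (vadd s t).
    move=> s t /imsetP[i iS ->] /imsetP[j jS ->] ne.
    have ij : i != j by apply: contra ne => /eqP ->.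
    move/forallP: cS => /(_ i); rewrite iS /= => /forallP /(_ j); rewrite jS ij /=.
    by rewrite /cay_adj ij /= sigma_Q toV_vadd.
  have [h1 h2 h3] := clique_V hT.
  rewrite cT in h1 h2 h3.
  rewrite rhoE.
  have qm := q_mod4 m; have om := odd_mod4 m.
  have em := divn_eq m 4.
  have := ltn_pmod m (isT : (0 < 4)%N).
  move: qm om em h1 h2 h3; set r := m %% 4; set d := m %/ 4.
  case: r => [|[|[|[|r]]]] //= qm om em h1 h2 h3 _.
  + rewrite qm /q /= in h2; case: (ltnP (2 * m).+1 #|S|) => H.
      by move: (h3 H); rewrite om.
    lia.
  + rewrite qm /q /= in h2; case: (ltnP (2 * m) #|S|) => H.
      by move: (h2 H).
    lia.
  + rewrite qm /q /= in h2; case: (ltnP (2 * m) #|S|) => H.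
      by move: (h2 H).
    lia.
  + lia.
- move=> m m4; rewrite rhoE.
  have em := divn_eq m 4.
  have d1 : (0 < m %/ 4)%N by rewrite divn_gt0.
  have := lem16 d1.
  have p1 : (0 < 2 ^ (m %% 4))%N by rewrite expn_gt0.
  have -> : (2 ^ m = 16 ^ (m %/ 4) * 2 ^ (m %% 4))%N.
    by rewrite [in LHS]em expnD (mulnC (m %/ 4) 4) expnM.
  move: p1; set a := 2 ^ (m %% 4); set b := 16 ^ (m %/ 4); set d := m %/ 4.
  move=> p1 h. nia.
Qed.
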